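(* Let $f(r),\xi(r)$ be smooth functions on $r\ge1$ with $\xi=0$ on $[1,R]$ for some $R>1$, let $n\in\mathbb Z\setminus\{0\}$, and let $\phi_n$ be the solution (given by the Green function formula, decaying as $r\to\infty$) of $$\Big(\partial_r^2+\tfrac1r\partial_r-\tfrac{n^2}{r^2}\Big)\phi_n=\xi(r)\partial_rf(r),\qquad\phi_n(1)=0.$$ Then $$|n|\,\Big\|\frac{\phi_n(r)}r\Big\|_{L^\infty(1,\infty)}\lesssim\|\xi f\|_{L^\infty}+\|\xi'f\|_{L^1},$$ with a constant independent of $n$.
   Context: The decaying solution is $-2|n|\phi_n(r)=\int_1^r\frac{s^{1+|n|}-s^{1-|n|}}{r^{|n|}}F(s)ds+\int_r^\infty\big(s^{1-|n|}r^{|n|}-s^{1-|n|}r^{-|n|}\big)F(s)ds$ with $F=\xi\partial_rf$. *)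

(* Defs.v *)
From Stdlib Require Import Reals ZArith.
From Coquelicot Require Import Coquelicot.
Open Scope R_scope.

(* g is smooth on (0, +oo), an open neighbourhood of [1, +oo).
   (Any smooth function on [1,+oo) extends smoothly, so this loses nothing.) *)
Definition smooth_pos (g : R -> R) : Prop :=
  forall (k : nat) (x : R), 0 < x -> ex_derive_n g k x.

(* Green kernel for the operator d_r^2 + (1/r) d_r - k^2/r^2 with phi(1)=0,
   decaying at infinity; here k = |n| and s^(1-k) is written s / s^k. *)
Definition green_in (k : nat) (r s : R) : R :=
  (s ^ (k + 1) - s / s ^ k) / r ^ k.

Definition green_out (k : nat) (r s : R) : R :=
  (s / s ^ k) * r ^ k - (s / s ^ k) / r ^ k.

Definition is_green_solution (n : Z) (F phi : R -> R) : Prop :=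
  forall r : R, 1 <= r ->
    exists I : R,
      is_RInt_gen (fun s => green_out (Z.abs_nat n) r s * F s)
                  (at_point r) (Rbar_locally p_infty) I /\
      -2 * IZR (Z.abs n) * phi r
        = RInt (fun s => green_in (Z.abs_nat n) r s * F s) 1 r + I.

(* Main.v *)
Require Import Defs.
From Stdlib Require Import Reals ZArith Lra Lia.
From Coquelicot Require Import Coquelicot.
Open Scope R_scope.

Lemma cmul (f g : R -> R) x : continuous f x -> continuous g x -> continuous (fun y => f y * g y) x.
Proof. intros; apply (continuous_mult (K:=R_AbsRing) f g x); auto. Qed.
Lemma cplus (f g : R -> R) x : continuous f x -> continuous g x -> continuous (fun y => f y + g y) x.
Proof. intros; apply (continuous_plus (V:=R_NormedModule) f g x); auto. Qed.

Lemma smooth_facts f x : smooth_pos f -> 0 < x ->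
  is_derive f x (Derive f x) /\ continuous f x /\ continuous (Derive f) x.
Proof.
  intros Hf Hx.
  assert (H1 := Hf 1%nat x Hx). assert (H2 := Hf 2%nat x Hx). simpl in H1, H2.
  assert (E1 : ex_derive f x) by (eapply ex_derive_ext; [|exact H1]; reflexivity).
  split; [apply Derive_correct; exact E1|]. split.
  - exact (ex_derive_continuous (K:=R_AbsRing) (V:=R_NormedModule) f x E1).
  - apply (ex_derive_continuous (K:=R_AbsRing) (V:=R_NormedModule)). eapply ex_derive_ext; [|exact H2].
    intros t; simpl. apply Derive_ext. reflexivity.
Qed.

Lemma ibp_bound (g g' xi f : R -> R) a b G A e :
  0 < a -> a <= b -> smooth_pos f -> smooth_pos xi ->
  (forall s, a <= s <= b -> is_derive g s (g' s)) ->
  (forall s, a <= s <= b -> continuous g' s) ->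
  (forall s, a <= s <= b -> Rabs (g s) <= G) ->
  (forall s, a <= s <= b -> Rabs (g' s) <= e * g' s) -> Rabs e <= 1 ->
  (forall s, a <= s <= b -> Rabs (xi s * f s) <= A) ->
  Rabs (RInt (fun s => g s * (xi s * Derive f s)) a b)
    <= 4*G*A + G * RInt (fun s => Rabs (Derive xi s * f s)) a b.
Proof.
  intros Ha Hab Hf Hxi Hg Hg'c HG He He1 HA.
  assert (Hmin : Rmin a b = a) by (apply Rmin_left; lra).
  assert (Hmax : Rmax a b = b) by (apply Rmax_right; lra).
  assert (Sf : forall s, a <= s <= b -> is_derive f s (Derive f s) /\ continuous f s /\ continuous (Derive f) s)
    by (intros; apply smooth_facts; auto; lra).
  assert (Sx : forall s, a <= s <= b -> is_derive xi s (Derive xi s) /\ continuous xi s /\ continuous (Derive xi) s)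
    by (intros; apply smooth_facts; auto; lra).
  assert (Gc : forall s, a <= s <= b -> continuous g s).
  { intros s Hs. apply (ex_derive_continuous (K:=R_AbsRing) (V:=R_NormedModule)).
    eexists; apply Hg; auto. }
  assert (G0 : 0 <= G) by (eapply Rle_trans; [apply Rabs_pos| apply (HG a); lra]).
  assert (A0 : 0 <= A) by (eapply Rle_trans; [apply Rabs_pos| apply (HA a); lra]).
  set (p1 := fun s => g' s * (xi s * f s)).
  set (p2 := fun s => g s * (Derive xi s * f s)).
  set (p3 := fun s => g s * (xi s * Derive f s)).
  assert (C1 : forall s, Rmin a b <= s <= Rmax a b -> continuous p1 s).
  { rewrite Hmin, Hmax; intros s Hs; destruct (Sf s Hs) as (_&?&?); destruct (Sx s Hs) as (_&?&?).
    unfold p1; apply cmul; auto; apply cmul; auto. }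
  assert (C2 : forall s, Rmin a b <= s <= Rmax a b -> continuous p2 s).
  { rewrite Hmin, Hmax; intros s Hs; destruct (Sf s Hs) as (_&?&?); destruct (Sx s Hs) as (_&?&?).
    unfold p2; apply cmul; auto; apply cmul; auto. }
  assert (C3 : forall s, Rmin a b <= s <= Rmax a b -> continuous p3 s).
  { rewrite Hmin, Hmax; intros s Hs; destruct (Sf s Hs) as (_&?&?); destruct (Sx s Hs) as (_&?&?).
    unfold p3; apply cmul; auto; apply cmul; auto. }
  assert (I1 := ex_RInt_continuous p1 a b C1).
  assert (I2 := ex_RInt_continuous p2 a b C2).
  assert (I3 := ex_RInt_continuous p3 a b C3).
  set (h := fun s => g s * (xi s * f s)).
  assert (Hh : is_RInt (fun s => p1 s + (p2 s + p3 s)) a b (minus (h b) (h a))).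
  { apply (is_RInt_derive (V:=R_CompleteNormedModule)); rewrite Hmin, Hmax.
    - intros s Hs. destruct (Sf s Hs) as (?&_&_); destruct (Sx s Hs) as (?&_&_).
      unfold h, p1, p2, p3.
      assert (D := is_derive_mult g (fun t => xi t * f t) s (g' s) _ (Hg s Hs)
          (is_derive_mult xi f s _ _ H0 H Rmult_comm) Rmult_comm).
      assert (E : p1 s + (p2 s + p3 s) = plus (mult (g' s) (xi s * f s)) (mult (g s) (plus (mult (Derive xi s) (f s)) (mult (xi s) (Derive f s)))))
        by (unfold p1,p2,p3,plus,mult;simpl; ring).
      unfold p1,p2,p3 in E; rewrite E; exact D.
    - intros s Hs. apply cplus; [apply C1|apply cplus; [apply C2|apply C3]]; rewrite Hmin, Hmax; auto. }
  assert (I23 : ex_RInt (fun s => p2 s + p3 s) a b) by exact (ex_RInt_plus p2 p3 a b I2 I3).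
  assert (E23 : RInt (fun x => p2 x + p3 x) a b = RInt p2 a b + RInt p3 a b)
    by exact (RInt_plus (V:=R_CompleteNormedModule) p2 p3 a b I2 I3).
  assert (E123 : RInt (fun x => p1 x + (p2 x + p3 x)) a b = RInt p1 a b + RInt (fun x => p2 x + p3 x) a b)
    by exact (RInt_plus (V:=R_CompleteNormedModule) p1 (fun s => p2 s + p3 s) a b I1 I23).
  assert (Eh : RInt (fun s => p1 s + (p2 s + p3 s)) a b = h b - h a) by exact (is_RInt_unique _ _ _ _ Hh).
  assert (Hgd : is_RInt g' a b (minus (g b) (g a))).
  { apply (is_RInt_derive (V:=R_CompleteNormedModule)); rewrite Hmin, Hmax; auto. }
  assert (Egd : RInt g' a b = g b - g a) by exact (is_RInt_unique _ _ _ _ Hgd).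
  assert (Ig' : ex_RInt g' a b) by (eexists; exact Hgd).
  assert (B1 : Rabs (RInt p1 a b) <= A * (e * (g b - g a))).
  { eapply Rle_trans; [apply abs_RInt_le; auto|].
    assert (Ia1 : ex_RInt (fun t => Rabs (p1 t)) a b).
    { apply (ex_RInt_continuous (V:=R_CompleteNormedModule)); intros; apply continuous_Rabs_comp; apply C1; auto. }
    assert (Is : ex_RInt (fun y => A*e* g' y) a b) by exact (ex_RInt_scal (V:=R_NormedModule) g' a b (A*e) Ig').
    eapply Rle_trans; [apply (RInt_le _ (fun y => A*e*g' y)); [lra|exact Ia1|exact Is|]|].
    - intros s Hs. unfold p1.
      rewrite Rabs_mult. assert (Hs' : a <= s <= b) by lra.
      specialize (He s Hs'); specialize (HA s Hs').
      assert (0 <= Rabs (g' s)) by apply Rabs_pos.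
      assert (0 <= Rabs (xi s * f s)) by apply Rabs_pos.
      apply Rle_trans with (A * (e * g' s)); [rewrite Rmult_comm; apply Rmult_le_compat; auto | right; ring].
    - assert (ES : RInt (fun y => A*e*g' y) a b = A * e * RInt g' a b) by exact (RInt_scal (V:=R_CompleteNormedModule) g' a b (A*e) Ig').
      rewrite ES, Egd. right; ring. }
  assert (B2 : Rabs (RInt p2 a b) <= G * RInt (fun s => Rabs (Derive xi s * f s)) a b).
  { eapply Rle_trans; [apply abs_RInt_le; auto|].
    assert (Ia2 : ex_RInt (fun t => Rabs (p2 t)) a b).
    { apply (ex_RInt_continuous (V:=R_CompleteNormedModule)); intros; apply continuous_Rabs_comp; apply C2; auto. }
    assert (Iq : ex_RInt (fun t => Rabs (Derive xi t * f t)) a b).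
    { apply (ex_RInt_continuous (V:=R_CompleteNormedModule)); intros s Hs; apply continuous_Rabs_comp.
      rewrite Hmin, Hmax in Hs. destruct (Sf s Hs) as (_&?&?); destruct (Sx s Hs) as (_&?&?).
      apply cmul; auto. }
    assert (Is : ex_RInt (fun y => G * (Rabs (Derive xi y * f y))) a b) by exact (ex_RInt_scal (V:=R_NormedModule) _ a b G Iq).
    eapply Rle_trans; [apply (RInt_le _ (fun y => G * (Rabs (Derive xi y * f y)))); [lra|exact Ia2|exact Is|]|].
    - intros s Hs. unfold p2.
      rewrite Rabs_mult. assert (Hs' : a <= s <= b) by lra.
      specialize (HG s Hs').
      assert (0 <= Rabs (Derive xi s * f s)) by apply Rabs_pos.
      apply Rmult_le_compat_r; auto.
    - right; exact (RInt_scal (V:=R_CompleteNormedModule) _ a b G Iq). }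
  assert (Hd : Rabs (g b - g a) <= 2 * G).
  { assert (X1 := HG a ltac:(lra)). assert (X2 := HG b ltac:(lra)).
    apply Rabs_le; split; apply Rabs_le_between in X1; apply Rabs_le_between in X2; lra. }
  assert (Hed : e * (g b - g a) <= 2 * G).
  { eapply Rle_trans; [apply Rle_abs|]. rewrite Rabs_mult.
    assert (0 <= Rabs (g b - g a)) by apply Rabs_pos. assert (0 <= Rabs e) by apply Rabs_pos. apply Rle_trans with (1 * Rabs (g b - g a)); [apply Rmult_le_compat_r; auto| lra]. }
  assert (Hhb : Rabs (h b) <= G * A).
  { unfold h; rewrite Rabs_mult. apply Rmult_le_compat; try apply Rabs_pos; [apply HG|apply HA]; lra. }
  assert (Hha : Rabs (h a) <= G * A).
  { unfold h; rewrite Rabs_mult. apply Rmult_le_compat; try apply Rabs_pos; [apply HG|apply HA]; lra. }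
  assert (Ep3 : RInt p3 a b = h b - h a - RInt p1 a b - RInt p2 a b).
  { rewrite E23 in E123. rewrite E123 in Eh. lra. }
  fold p3. rewrite Ep3.
  assert (Rabs (h b - h a - RInt p1 a b - RInt p2 a b) <= Rabs (h b) + Rabs (h a) + Rabs (RInt p1 a b) + Rabs (RInt p2 a b)).
  { unfold Rminus. set (u := h b); set (v := h a); set (w1 := RInt p1 a b); set (w2 := RInt p2 a b).
    pose proof (Rabs_triang (u + - v + - w1) (- w2)). pose proof (Rabs_triang (u + - v) (- w1)).
    pose proof (Rabs_triang u (- v)). rewrite !Rabs_Ropp in *. lra. }
  assert (A * (e * (g b - g a)) <= A * (2*G)) by (apply Rmult_le_compat_l; auto).
  lra.
Qed.

Lemma gen_bound (h : R -> R) r I K :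
  is_RInt_gen h (at_point r) (Rbar_locally p_infty) I ->
  (forall M, r <= M -> Rabs (RInt h r M) <= K) -> Rabs I <= K.
Proof.
  intros HI HK. destruct (Rle_lt_dec (Rabs I) K) as [|Hlt]; auto. exfalso.
  assert (Heps : 0 < Rabs I - K) by lra.
  set (eps := mkposreal _ Heps).
  assert (X := HI (ball I eps) (locally_ball I eps)).
  destruct X as [Q R0 HQ HR HP].
  destruct HR as [M HM].
  set (x := Rmax M r + 1).
  assert (Hx1 : M < x) by (unfold x; pose proof (Rmax_l M r); lra).
  assert (Hx2 : r <= x) by (unfold x; pose proof (Rmax_r M r); lra).
  destruct (HP r x HQ (HM x Hx1)) as [y [Hy Hb]].
  simpl in Hy. rewrite <- (is_RInt_unique _ _ _ _ Hy) in Hb.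
  specialize (HK x Hx2).
  change (Rabs (RInt h r x - I) < Rabs I - K) in Hb.
  apply Rabs_def2 in Hb. destruct Hb.
  apply Rabs_le_between in HK.
  destruct (Rle_lt_dec 0 I); [rewrite Rabs_pos_eq in *|rewrite Rabs_left in *]; lra.
Qed.

Lemma der_invpow m s : 0 < s -> is_derive (fun t => (/t)^m) s (- INR m * (/s)^(S m)).
Proof.
  intros Hs. auto_derive. { lra. }
  destruct m as [|m']. { simpl. ring. }
  simpl pow. field. lra.
Qed.

Lemma pow_ge1 x n : 1 <= x -> 1 <= x^n.
Proof. intros H; induction n; simpl; [lra|]. replace 1 with (1*1) by ring. apply Rmult_le_compat; lra. Qed.
Lemma pow_le1 x n : 0 <= x <= 1 -> x^n <= 1.
Proof. intros H; induction n; simpl; [lra|]. replace 1 with (1*1) by ring. apply Rmult_le_compat; try lra. apply pow_le; lra. Qed.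

Definition g_in m r s := (s^(S (S m)) - (/s)^m) * / r^(S m).
Definition g_in' m r s := (INR (S (S m)) * s^(S m) + INR m * (/s)^(S m)) * / r^(S m).
Definition g_out m r s := (/s)^m * (r^(S m) - / r^(S m)).
Definition g_out' m r s := - INR m * (/s)^(S m) * (r^(S m) - / r^(S m)).

Lemma cont_invpow m s : 0 < s -> continuous (fun t => (/t)^m) s.
Proof. intros Hs. apply (ex_derive_continuous (K:=R_AbsRing) (V:=R_NormedModule)). eexists; apply der_invpow; auto. Qed.
Lemma cont_pow m s : continuous (fun t => t^m) s.
Proof. apply (ex_derive_continuous (K:=R_AbsRing) (V:=R_NormedModule)). auto_derive; auto. Qed.

Lemma der_g_in m r s : 0 < s -> is_derive (g_in m r) s (g_in' m r s).
Proof.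
  intros Hs. unfold g_in, g_in'.
  assert (D1 : is_derive (fun t => t^(S (S m))) s (INR (S (S m)) * s^(S m))).
  { auto_derive; auto. change (1 * (INR (S (S m)) * (s^(S m))) = INR (S (S m)) * s ^ S m). ring. }
  assert (D := is_derive_minus _ _ s _ _ D1 (der_invpow m s Hs)).
  assert (D' := is_derive_scal _ s (/ r^(S m)) _ D).
  eapply is_derive_ext; [|replace ((INR (S (S m)) * s ^ S m + INR m * (/ s) ^ S m) * / r ^ S m) with (/ r ^ S m * minus (INR (S (S m)) * s ^ S m) (- INR m * (/ s) ^ S m)); [exact D'|]].
  - intros t; simpl. unfold minus, plus, opp; simpl. ring.
  - unfold minus, plus, opp; simpl. ring.
Qed.

Lemma der_g_out m r s : 0 < s -> is_derive (g_out m r) s (g_out' m r s).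
Proof.
  intros Hs. unfold g_out, g_out'.
  assert (D' := is_derive_scal _ s (r^(S m) - / r^(S m)) _ (der_invpow m s Hs)).
  eapply is_derive_ext; [|replace (- INR m * (/ s) ^ S m * (r ^ S m - / r ^ S m)) with ((r ^ S m - / r ^ S m) * (- INR m * (/ s) ^ S m)); [exact D'|]].
  - intros t; simpl. ring.
  - ring.
Qed.


Lemma cconst (c x : R) : continuous (fun _ : R => c) x.
Proof. apply (continuous_const (U:=R_UniformSpace) (V:=R_UniformSpace)). Qed.

Lemma cont_g_in' m r s : 0 < s -> continuous (g_in' m r) s.
Proof.
  intros Hs. unfold g_in'. apply cmul; [|apply cconst].
  apply cplus; apply cmul; try apply cconst; [apply cont_pow|apply cont_invpow; auto].
Qed.
Lemma cont_g_out' m r s : 0 < s -> continuous (g_out' m r) s.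
Proof.
  intros Hs. unfold g_out'. apply cmul; [|apply cconst].
  apply cmul; [apply cconst|apply cont_invpow; auto].
Qed.

Lemma g_in'_pos m r s : 0 < s -> 1 <= r -> 0 <= g_in' m r s.
Proof.
  intros Hs Hr. unfold g_in'. apply Rmult_le_pos.
  - apply Rplus_le_le_0_compat; apply Rmult_le_pos; try apply pos_INR; apply pow_le;
     [lra| left; apply Rinv_0_lt_compat; lra].
  - left; apply Rinv_0_lt_compat; apply pow_lt; lra.
Qed.

Lemma g_out'_neg m r s : 0 < s -> 1 <= r -> g_out' m r s <= 0.
Proof.
  intros Hs Hr. unfold g_out'.
  assert (0 <= r^(S m) - / r^(S m)).
  { assert (H1 := pow_ge1 r (S m) Hr).
    assert (/ r^(S m) <= 1). { rewrite <- Rinv_1. apply Rinv_le_contravar; lra. } lra. }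
  assert (0 <= INR m * (/ s)^(S m)).
  { apply Rmult_le_pos; [apply pos_INR| apply pow_le; left; apply Rinv_0_lt_compat; lra]. }
  replace (- INR m * (/ s) ^ S m * (r ^ S m - / r ^ S m)) with (- ((INR m * (/ s) ^ S m) * (r ^ S m - / r ^ S m))) by ring.
  assert (0 <= (INR m * (/ s) ^ S m) * (r ^ S m - / r ^ S m)) by (apply Rmult_le_pos; auto).
  lra.
Qed.

Lemma g_in_bound m r s : 1 <= s <= r -> Rabs (g_in m r s) <= r.
Proof.
  intros Hs. unfold g_in.
  assert (Hrp : 0 < r^(S m)) by (apply pow_lt; lra).
  assert (A1 := pow_ge1 s (S (S m)) ltac:(lra)).
  assert (A2 : (/s)^m <= 1).
  { apply pow_le1. split; [left; apply Rinv_0_lt_compat; lra|]. rewrite <- Rinv_1. apply Rinv_le_contravar; lra. }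
  assert (A3 : 0 <= (/s)^m) by (apply pow_le; left; apply Rinv_0_lt_compat; lra).
  assert (A4 : s^(S (S m)) <= r^(S (S m))) by (apply pow_incr; lra).
  assert (E : r^(S (S m)) * / r^(S m) = r) by (simpl; field; split; [apply pow_nonzero|]; lra).
  assert (0 <= / r^(S m)) by (left; apply Rinv_0_lt_compat; auto).
  rewrite Rabs_pos_eq.
  - apply Rle_trans with (r^(S (S m)) * / r^(S m)); [apply Rmult_le_compat_r; auto; lra| lra].
  - apply Rmult_le_pos; auto; lra.
Qed.

Lemma g_out_bound m r s : 1 <= r <= s -> Rabs (g_out m r s) <= r.
Proof.
  intros Hs. unfold g_out.
  assert (Hrp : 0 < r^(S m)) by (apply pow_lt; lra).
  assert (Hc : 0 <= r^(S m) - / r^(S m)).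
  { assert (H1 := pow_ge1 r (S m) ltac:(lra)).
    assert (/ r^(S m) <= 1). { rewrite <- Rinv_1. apply Rinv_le_contravar; lra. } lra. }
  assert (A3 : 0 <= (/s)^m) by (apply pow_le; left; apply Rinv_0_lt_compat; lra).
  assert (A4 : (/s)^m <= (/r)^m) by (apply pow_incr; split; [left; apply Rinv_0_lt_compat; lra| apply Rinv_le_contravar; lra]).
  assert (E : (/r)^m * r^(S m) = r).
  { simpl. rewrite <- Rmult_assoc, (Rmult_comm _ r), Rmult_assoc, <- Rpow_mult_distr, Rinv_l, pow1; lra. }
  assert (0 <= / r^(S m)) by (left; apply Rinv_0_lt_compat; auto).
  rewrite Rabs_pos_eq by (apply Rmult_le_pos; auto).
  apply Rle_trans with ((/r)^m * r^(S m)); [|lra].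
  apply Rmult_le_compat; try lra.
Qed.

Lemma green_in_eq m r s : 0 < s -> green_in (S m) r s = g_in m r s.
Proof.
  intros Hs. unfold green_in, g_in. rewrite Nat.add_1_r. unfold Rdiv. f_equal. f_equal.
  rewrite pow_inv. simpl. field. split; [apply pow_nonzero|]; lra.
Qed.

Lemma green_out_eq m r s : 0 < s -> 0 < r -> green_out (S m) r s = g_out m r s.
Proof.
  intros Hs Hr. unfold green_out, g_out.
  assert (E : s / s ^ S m = (/ s)^m).
  { rewrite pow_inv. simpl. field. split; [apply pow_nonzero|]; lra. }
  rewrite E. unfold Rdiv. ring.
Qed.

Theorem lemma4p6 :
  exists C : R, 0 < C /\
    forall (n : Z) (f xi phi : R -> R) (Rr A B : R),
      n <> 0%Z ->
      smooth_pos f -> smooth_pos xi ->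
      1 < Rr -> (forall r, 1 <= r <= Rr -> xi r = 0) ->
      is_green_solution n (fun s => xi s * Derive f s) phi ->
      (* A bounds || xi f ||_{L^oo(1,oo)} *)
      (forall r, 1 <= r -> Rabs (xi r * f r) <= A) ->
      (* B bounds || xi' f ||_{L^1(1,oo)} *)
      (forall M, 1 <= M -> RInt (fun s => Rabs (Derive xi s * f s)) 1 M <= B) ->
      forall r, 1 <= r -> IZR (Z.abs n) * Rabs (phi r / r) <= C * (A + B).
Proof.
  exists 4. split; [lra|].
  intros n f xi phi Rr A B Hn Hf Hxi HRr Hxi0 Hgreen HA HB r Hr.
  assert (Hm : exists m, Z.abs_nat n = S m).
  { destruct (Z.abs_nat n) eqn:E; [lia|eauto]. }
  destruct Hm as [m Hm].
  assert (Hk : IZR (Z.abs n) = INR (S m)).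
  { rewrite <- Hm, INR_IZR_INZ, Zabs2Nat.id_abs. reflexivity. }
  destruct (Hgreen r Hr) as [I [HI Heq]]. rewrite Hm in HI, Heq. rewrite Hk in Heq |- *.
  assert (A0 : 0 <= A) by (eapply Rle_trans; [apply Rabs_pos|apply (HA 1); lra]).
  assert (B0 : 0 <= B).
  { assert (Z : RInt (fun s => Rabs (Derive xi s * f s)) 1 1 = 0) by exact (RInt_point 1 (fun s => Rabs (Derive xi s * f s))).
    rewrite <- Z; apply HB; lra. }
  assert (Iq : forall a b, 1 <= a <= b -> ex_RInt (fun s => Rabs (Derive xi s * f s)) a b).
  { intros a b Hab. apply (ex_RInt_continuous (V:=R_CompleteNormedModule)). intros s Hs.
    rewrite Rmin_left, Rmax_right in Hs by lra.
    destruct (smooth_facts f s Hf ltac:(lra)) as (_&?&?); destruct (smooth_facts xi s Hxi ltac:(lra)) as (_&?&?).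
    apply continuous_Rabs_comp. apply cmul; auto. }
  assert (Bin : Rabs (RInt (fun s => green_in (S m) r s * (xi s * Derive f s)) 1 r) <= 4 * r * A + r * B).
  { rewrite (RInt_ext _ (fun s => g_in m r s * (xi s * Derive f s))).
    2:{ intros s Hs. rewrite Rmin_left, Rmax_right in Hs by lra. rewrite green_in_eq by lra. reflexivity. }
    eapply Rle_trans; [apply (ibp_bound (g_in m r) (g_in' m r) xi f 1 r r A 1)|]; auto; try lra.
    - intros; apply der_g_in; lra.
    - intros; apply cont_g_in'; lra.
    - intros; apply g_in_bound; lra.
    - intros s Hs. rewrite Rabs_pos_eq by (apply g_in'_pos; lra). lra.
    - rewrite Rabs_R1; lra.
    - intros; apply HA; lra.
    - assert (HB' := HB r Hr). assert (r * RInt (fun s => Rabs (Derive xi s * f s)) 1 r <= r * B)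
        by (apply Rmult_le_compat_l; lra). lra. }
  assert (Bout : Rabs I <= 4 * r * A + r * B).
  { apply (gen_bound _ r I _ HI). intros M HM.
    rewrite (RInt_ext _ (fun s => g_out m r s * (xi s * Derive f s))).
    2:{ intros s Hs. rewrite Rmin_left, Rmax_right in Hs by lra. rewrite green_out_eq by lra. reflexivity. }
    eapply Rle_trans; [apply (ibp_bound (g_out m r) (g_out' m r) xi f r M r A (-1))|]; auto; try lra.
    - intros; apply der_g_out; lra.
    - intros; apply cont_g_out'; lra.
    - intros; apply g_out_bound; lra.
    - intros s Hs. assert (X := g_out'_neg m r s ltac:(lra) Hr). rewrite Rabs_left1 by lra. lra.
    - rewrite Rabs_left by lra; lra.
    - intros; apply HA; lra.
    - assert (HB' := HB M ltac:(lra)).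
      assert (Ch := RInt_Chasles (V:=R_CompleteNormedModule) (fun s => Rabs (Derive xi s * f s)) 1 r M (Iq 1 r ltac:(lra)) (Iq r M ltac:(lra))).
      assert (P0 : 0 <= RInt (fun s => Rabs (Derive xi s * f s)) 1 r).
      { apply RInt_ge_0; [lra|apply Iq; lra|intros; apply Rabs_pos]. }
      change (RInt (fun s => Rabs (Derive xi s * f s)) 1 r + RInt (fun s => Rabs (Derive xi s * f s)) r M = RInt (fun s => Rabs (Derive xi s * f s)) 1 M) in Ch.
      assert (r * RInt (fun s => Rabs (Derive xi s * f s)) r M <= r * B)
        by (apply Rmult_le_compat_l; lra). lra. }
  assert (HP : 2 * INR (S m) * Rabs (phi r) <= 2 * (4 * r * A + r * B)).
  { replace (2 * INR (S m) * Rabs (phi r)) with (Rabs (-2 * INR (S m) * phi r)).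
    2:{ rewrite !Rabs_mult, (Rabs_left (-2)) by lra. rewrite (Rabs_pos_eq (INR (S m))) by apply pos_INR. ring. }
    rewrite Heq. pose proof (Rabs_triang (RInt (fun s => green_in (S m) r s * (xi s * Derive f s)) 1 r) I). lra. }
  unfold Rdiv. rewrite Rabs_mult, (Rabs_pos_eq (/ r)) by (left; apply Rinv_0_lt_compat; lra).
  assert (Hrr : r * / r = 1) by (field; lra).
  assert (HKP : INR (S m) * Rabs (phi r) <= r * (4 * A + B)) by lra.
  apply Rle_trans with ((INR (S m) * Rabs (phi r)) * / r); [right; ring|].
  apply Rle_trans with ((r * (4 * A + B)) * / r).
  - apply Rmult_le_compat_r; [left; apply Rinv_0_lt_compat; lra| auto].
  - replace (r * (4 * A + B) * / r) with (4 * A + B) by (field; lra). lra.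
Qed.
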